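(* Let $X,Y,Z$ be finite random variables forming a Markov chain $X\leftrightarrow Y\leftrightarrow Z$, let $K_1$ be the Gács–Körner common information of $(X,Y)$ and $K_2$ the Gács–Körner common information of $(X,Z)$. Then $H(K_2\mid K_1)=0$ and $H(K_2)\le H(K_1)$.
   Context: For finite random variables $X,Y$ with (w.l.o.g. disjoint) alphabets, the bipartite representation $\mathcal B_{X,Y}$ is the bipartite graph on $\mathcal X\cup\mathcal Y$ with an edge between $x$ and $y$ iff $p_{X,Y}(x,y)>0$. The Gács–Körner common information $K_{X,Y}$ is the random variable equal to the index of the connected component of $\mathcal B_{X,Y}$ containing $(X,Y)$; equivalently, it maximizes $H(U)$ over all $U$ with $H(U\mid X)=H(U\mid Y)=0$. *)

(* Defs.v *)
From HB Require Import structures.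
From mathcomp Require Import all_boot all_order all_algebra.
From mathcomp Require Import reals exp.
Set Implicit Arguments. Unset Strict Implicit. Unset Printing Implicit Defensive.
Import Order.TTheory GRing.Theory Num.Theory.
Local Open Scope ring_scope.

Section Defs.
Variables (R : realType) (Omega : finType).

Definition is_pmf (P : {ffun Omega -> R}) :=
  (forall w, 0 <= P w) /\ \sum_(w : Omega) P w = 1.

Definition pr (P : {ffun Omega -> R}) (E : pred Omega) : R :=
  \sum_(w | E w) P w.

Definition entropy (P : {ffun Omega -> R}) (T : finType) (f : Omega -> T) : R :=
  - \sum_(t : T) pr P (fun w => f w == t) * ln (pr P (fun w => f w == t)).

Definition cond_entropy (P : {ffun Omega -> R}) (T U : finType)
    (f : Omega -> T) (g : Omega -> U) : R :=
  - \sum_(t : T) \sum_(u : U)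
      pr P (fun w => (f w == t) && (g w == u)) *
      ln (pr P (fun w => (f w == t) && (g w == u)) / pr P (fun w => g w == u)).

Definition markov_chain (P : {ffun Omega -> R}) (TX TY TZ : finType)
    (X : Omega -> TX) (Y : Omega -> TY) (Z : Omega -> TZ) :=
  forall x y z,
    pr P (fun w => [&& X w == x, Y w == y & Z w == z]) * pr P (fun w => Y w == y)
    = pr P (fun w => (X w == x) && (Y w == y)) * pr P (fun w => (Y w == y) && (Z w == z)).

Definition bipartite (P : {ffun Omega -> R}) (TX TY : finType)
    (X : Omega -> TX) (Y : Omega -> TY) : rel (TX + TY) :=
  fun u v =>
    match u, v with
    | inl x, inr y => 0 < pr P (fun w => (X w == x) && (Y w == y))
    | inr y, inl x => 0 < pr P (fun w => (X w == x) && (Y w == y))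
    | _, _ => false
    end.

(* Gacs-Korner common information: the connected component of B_{X,Y}
   containing (X, Y) (labelled by the component itself, as a vertex set;
   we use the vertex X, which lies in the same component as Y whenever
   the outcome has positive probability). *)
Definition gk (P : {ffun Omega -> R}) (TX TY : finType)
    (X : Omega -> TX) (Y : Omega -> TY) : Omega -> {set (TX + TY)} :=
  fun w => [set v | connect (bipartite P X Y) (inl (X w)) v].

End Defs.

(* Main.v *)
Require Import Defs.
From HB Require Import structures.
From mathcomp Require Import all_boot all_order all_algebra.
From mathcomp Require Import reals exp.
Import Order.TTheory GRing.Theory Num.Theory.
Local Open Scope ring_scope.

Section Aux.
Variables (R : realType) (Omega : finType) (P : {ffun Omega -> R}).

Lemma pr_part (U : finType) (h : Omega -> U) (E : pred Omega) :
  \sum_(u : U) pr P (fun w => E w && (h w == u)) = pr P E.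
Proof.
rewrite /pr.
under eq_bigr => u _ do rewrite big_mkcond.
rewrite exchange_big [RHS]big_mkcond /=; apply: eq_bigr => w _.
rewrite (bigD1 (h w)) //= eqxx andbT big1 ?addr0 // => u /negbTE hu.
by rewrite eq_sym hu andbF.
Qed.

Lemma pr_mono (E F : pred Omega) : (forall w, 0 <= P w) ->
  (forall w, E w -> F w) -> pr P E <= pr P F.
Proof.
move=> P0 EF; rewrite /pr [X in X <= _]big_mkcond [X in _ <= X]big_mkcond.
apply: ler_sum => w _; case: (boolP (E w)) => Ew.
  by rewrite (EF _ Ew).
by case: (F w).
Qed.

Lemma pr_ge0 (E : pred Omega) : (forall w, 0 <= P w) -> 0 <= pr P E.
Proof. by move=> P0; apply: sumr_ge0. Qed.

Lemma pr_joint (T U : finType) (f : Omega -> T) (h : Omega -> U) :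
  (forall w w', h w = h w' -> f w = f w') ->
  forall t u, pr P (fun w => (f w == t) && (h w == u)) = 0 \/
              pr P (fun w => (f w == t) && (h w == u)) = pr P (fun w => h w == u).
Proof.
move=> fac t u.
case: (pickP (fun w0 => h w0 == u)) => [w0 /eqP hw0|none].
  case: (boolP (f w0 == t)) => [/eqP fw0|fw0].
    right; apply: eq_bigl => w /=.
    case: (boolP (h w == u)) => [/eqP hw|]; last by rewrite andbF.
    by rewrite (fac w w0) ?fw0 ?eqxx // hw hw0.
  left; apply: big1 => w /andP[/eqP fw /eqP hw].
  by move: fw0; rewrite -fw (fac w0 w) ?eqxx // hw hw0.
left; apply: big1 => w /andP[_ hw]; by rewrite none in hw.
Qed.

Lemma cond_entropy0 (T U : finType) (f : Omega -> T) (h : Omega -> U) :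
  (forall w w', h w = h w' -> f w = f w') -> cond_entropy P f h = 0.
Proof.
move=> fac; rewrite /cond_entropy big1 ?oppr0 // => t _.
apply: big1 => u _.
case: (@pr_joint _ _ f h fac t u) => ->; first by rewrite mul0r.
have [->|nz] := eqVneq (pr P (fun w => h w == u)) 0; first by rewrite mul0r.
by rewrite divff // ln1 mulr0.
Qed.

Lemma entropy_le (T U : finType) (f : Omega -> T) (h : Omega -> U) :
  (forall w, 0 <= P w) ->
  (forall w w', h w = h w' -> f w = f w') -> entropy P f <= entropy P h.
Proof.
move=> P0 fac; rewrite /entropy lerN2.
have step1 : \sum_(t : T) \sum_(u : U)
     pr P (fun w => (f w == t) && (h w == u)) * ln (pr P (fun w => (f w == t) && (h w == u)))
   <= \sum_(t : T) pr P (fun w => f w == t) * ln (pr P (fun w => f w == t)).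
  apply: ler_sum => t _.
  rewrite -[X in _ <= X * _](@pr_part _ h (fun w => f w == t)) mulr_suml.
  apply: ler_sum => u _.
  set a := pr P _; set b := pr P _.
  have a0 : 0 <= a by apply: pr_ge0.
  have ab : a <= b by apply: pr_mono => // w /andP[].
  have [->|anz] := eqVneq a 0; first by rewrite !mul0r.
  have apos : 0 < a by rewrite lt0r anz.
  apply: ler_wpM2l => //; rewrite ler_ln // ?posrE //.
  exact: lt_le_trans ab.
apply: le_trans step1; rewrite exchange_big /=; apply: ler_sum => u _.
rewrite le_eqVlt; apply/orP; left; apply/eqP.
rewrite -[X in X * _](@pr_part _ f (fun w => h w == u)) mulr_suml.
apply: eq_bigr => t _.
have -> : pr P (fun w => (h w == u) && (f w == t)) =
          pr P (fun w => (f w == t) && (h w == u)).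
  by apply: eq_bigl => w; rewrite andbC.
by case: (@pr_joint _ _ f h fac t u) => ->; rewrite ?mul0r.
Qed.

End Aux.

Theorem corollary1 (R : realType) (Omega : finType) (P : {ffun Omega -> R})
    (TX TY TZ : finType) (X : Omega -> TX) (Y : Omega -> TY) (Z : Omega -> TZ) :
  is_pmf P ->
  markov_chain P X Y Z ->
  cond_entropy P (gk P X Z) (gk P X Y) = 0 /\
  entropy P (gk P X Z) <= entropy P (gk P X Y).
Proof.
move=> [P0 _] mc.
have symB : forall (TB : finType) (B : Omega -> TB), symmetric (bipartite P X B).
  by move=> TB B [a|a] [b|b].
have adj : forall x x' y,
    0 < pr P (fun w => (X w == x) && (Y w == y)) ->
    0 < pr P (fun w => (X w == x') && (Y w == y)) ->
    connect (bipartite P X Z) (inl x) (inl x').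
  move=> x x' y pxy px'y.
  have : 0 < \sum_(z : TZ) pr P (fun w => (Y w == y) && (Z w == z)).
    rewrite pr_part; apply: lt_le_trans pxy _; apply: pr_mono => // w /andP[] //.
  move=> /lt0r_neq0; rewrite psumr_neq0; last by move=> z _; apply: pr_ge0.
  move=> /hasP [z _ /andP [_ pyz]].
  have posxyz : forall x1, 0 < pr P (fun w => (X w == x1) && (Y w == y)) ->
       0 < pr P (fun w => (X w == x1) && (Z w == z)).
    move=> x1 p1.
    have h := mc x1 y z.
    have py0 : 0 <= pr P (fun w => Y w == y) by apply: pr_ge0.
    have nz : pr P (fun w => [&& X w == x1, Y w == y & Z w == z]) != 0.
      apply/eqP => e; move: h; rewrite e mul0r => /esym /eqP.
      by rewrite mulf_eq0 !gt_eqF.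
    have pos : 0 < pr P (fun w => [&& X w == x1, Y w == y & Z w == z]).
      by rewrite lt0r nz pr_ge0.
    apply: lt_le_trans pos _; apply: pr_mono => // w /and3P[-> _ ->].
    done.
  have c1 : connect (bipartite P X Z) (inl x) (inr z).
    by apply: connect1 => /=; exact: posxyz.
  have c2 : connect (bipartite P X Z) (inr z) (inl x').
    by apply: connect1 => /=; exact: posxyz.
  exact: connect_trans c1 c2.
have fac : forall w w', gk P X Y w = gk P X Y w' -> gk P X Z w = gk P X Z w'.
  move=> w w' e.
  have c : connect (bipartite P X Y) (inl (X w)) (inl (X w')).
    have : inl (X w') \in gk P X Y w' by rewrite inE connect0.
    by rewrite -e inE.
  pose S := fun v : TX + TY => match v with
    | inl x1 => connect (bipartite P X Z) (inl (X w)) (inl x1)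
    | inr y1 => [exists x1, (0 < pr P (fun w => (X w == x1) && (Y w == y1)))
                     && connect (bipartite P X Z) (inl (X w)) (inl x1)]
    end.
  have clS : closed (bipartite P X Y) S.
    have one : forall x1 y1, 0 < pr P (fun w => (X w == x1) && (Y w == y1)) ->
        S (inl x1) = S (inr y1).
      move=> x1 y1 p1 /=; apply/idP/existsP.
        by move=> cx; exists x1; rewrite p1.
      move=> [x2 /andP [p2 c2]]; apply: connect_trans c2 _; exact: adj p2 p1.
    move=> [a|a] [b|b] //= hab; rewrite /in_mem /=.
      exact: one.
    move: (one _ _ hab); rewrite /= => ->; done.
  have := closed_connect clS c.
  rewrite /in_mem /= connect0 => /esym c2.
  apply/setP => v; rewrite !inE.
  exact: (same_connect (sym_connect_sym (symB _ Z)) c2 v).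
split; first exact: cond_entropy0.
exact: entropy_le.
Qed.
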